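(* For all integers $m$ and $n$, \[ \sum_{k = 1}^n ( - 1)^{k - 1} F_{mk}^{\,4} = \frac{F_{mn} F_{mn + m} \left\{ (-1)^{n-1}L_m L_{mn} L_{mn + m} + (-1)^{n(m-1)}4L_{2m} \right\}}{5L_m L_{2m}}\,. \]
   Context: $F_i$ and $L_i$ denote the Fibonacci and Lucas numbers, defined for all $i\in\mathbb{Z}$ by $F_i=F_{i-1}+F_{i-2}$, $F_0=0$, $F_1=1$, and $L_i=L_{i-1}+L_{i-2}$, $L_0=2$, $L_1=1$; equivalently $F_{-i}=(-1)^{i-1}F_i$ and $L_{-i}=(-1)^iL_i$. Summation convention for an arbitrary integer upper limit: $\sum_{k=a}^{a-1} f(k)=0$, and for $n<a-1$, $\sum_{k=a}^{n} f(k) = -\sum_{k=n+1}^{a-1} f(k)$. *)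

(* Defs.v *)
From mathcomp Require Import all_boot all_order all_algebra.
Set Implicit Arguments. Unset Strict Implicit. Unset Printing Implicit Defensive.
Import Order.TTheory GRing.Theory Num.Theory.
Local Open Scope ring_scope.

Fixpoint fibn (n : nat) : int :=
  match n with
  | 0 => 0
  | 1 => 1
  | (m.+1 as k).+1 => fibn k + fibn m
  end.

Fixpoint lucn (n : nat) : int :=
  match n with
  | 0 => 2
  | 1 => 1
  | (m.+1 as k).+1 => lucn k + lucn m
  end.

(* Extension to all integers: F_{-i} = (-1)^(i-1) F_i, L_{-i} = (-1)^i L_i.
   Negz n denotes -(n+1). *)
Definition F (z : int) : int :=
  match z with
  | Posz n => fibn n
  | Negz n => (-1) ^+ n * fibn n.+1
  end.

Definition L (z : int) : int :=
  match z with
  | Posz n => lucn n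
  | Negz n => (-1) ^+ n.+1 * lucn n.+1
  end.

(* Sum over integer range with the standard convention:
   sumZ a n f = \sum_{k=a}^n f k  if n >= a-1 (empty when n = a-1),
              = - \sum_{k=n+1}^{a-1} f k  if n < a-1. *)
Definition sumZ (R : zmodType) (a n : int) (f : int -> R) : R :=
  let up : nat := absz (n + 1 - a)%R in
  let dn : nat := absz (a - 1 - n)%R in
  if (a <= n + 1)%R then
    \sum_(0 <= i < up) f (a + i%:Z)
  else
    - \sum_(0 <= i < dn) f (n + 1 + i%:Z).

Example F_neg3 : F (-3) = 2. Proof. by []. Qed.
Example F_neg4 : F (-4) = -3. Proof. by []. Qed.
Example L_neg3 : L (-3) = -4. Proof. by []. Qed.
Example L_neg2 : L (-2) = 3. Proof. by []. Qed.
Example sum_chk : sumZ 1 3 (fun k => k) = 6. Proof. by rewrite /sumZ /= !big_nat_recr //= big_geq. Qed.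

(* Main.v *)
Require Import Defs.
From mathcomp Require Import all_boot all_order all_algebra.
From mathcomp Require Import ring lra zify.
Import Order.TTheory GRing.Theory Num.Theory.
Local Open Scope ring_scope.

Lemma fibSS n : fibn n.+2 = fibn n.+1 + fibn n. Proof. by []. Qed.
Lemma lucSS n : lucn n.+2 = lucn n.+1 + lucn n. Proof. by []. Qed.

Lemma nat_ids n :
  [/\ 2 * fibn n.+1 = fibn n + lucn n, 2 * lucn n.+1 = lucn n + 5 * fibn n,
      lucn n.+1 = fibn n + fibn n.+2 & 5 * fibn n.+1 = lucn n + lucn n.+2].
Proof.
suff: (forall n, ([/\ 2 * fibn n.+1 = fibn n + lucn n, 2 * lucn n.+1 = lucn n + 5 * fibn n,
      lucn n.+1 = fibn n + fibn n.+2 & 5 * fibn n.+1 = lucn n + lucn n.+2]) /\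
      ([/\ 2 * fibn n.+2 = fibn n.+1 + lucn n.+1, 2 * lucn n.+2 = lucn n.+1 + 5 * fibn n.+1,
      lucn n.+2 = fibn n.+1 + fibn n.+3 & 5 * fibn n.+2 = lucn n.+1 + lucn n.+3])).
  by move=> H; case: (H n).
elim=> [|k [_ [a b c d]]]; first by split; split.
split; first by split.
move: a b c d; rewrite !(fibSS k.+2) !(lucSS k.+2) !(fibSS k.+1) !(lucSS k.+1) !(fibSS k) !(lucSS k).
move=> a b c d; split; lia.
Qed.

Lemma FP n : F (Posz n) = fibn n. Proof. by []. Qed.
Lemma LP n : L (Posz n) = lucn n. Proof. by []. Qed.
Lemma FN n : F (Negz n) = (-1) ^+ n * fibn n.+1. Proof. by []. Qed.
Lemma LN n : L (Negz n) = (-1) ^+ n.+1 * lucn n.+1. Proof. by []. Qed.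
Lemma PS n : Posz n + 1 = Posz n.+1. Proof. by rewrite -[1]/(Posz 1) -PoszD addn1. Qed.
Lemma NS n : Negz n.+1 + 1 = Negz n. Proof. by rewrite !NegzE; lia. Qed.
Lemma N0 : Negz 0 + 1 = 0. Proof. by []. Qed.

Lemma stepFL (z : int) : 2 * F (z + 1) = F z + L z /\ 2 * L (z + 1) = L z + 5 * F z.
Proof.
case: z => [n|[|i]].
- by rewrite PS !FP !LP; case: (nat_ids n).
- by rewrite N0 FN LN FP LP.
- rewrite NS !FN !LN; case: (nat_ids i.+1) => _ _ h1 h2.
  split; first by rewrite h1 (fibSS i.+1) !exprS; ring.
  have h2' : 5 * fibn i.+2 = 2 * lucn i.+1 + lucn i.+2 by rewrite h2 (lucSS i.+1); ring.
  have -> : (-1) ^+ i.+2 * lucn i.+2 + 5 * ((-1) ^+ i.+1 * fibn i.+2) =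
     (-1) ^+ i.+1 * (5 * fibn i.+2 - lucn i.+2) :> int by rewrite !exprS; ring.
  rewrite h2'; ring.
Qed.

Definition f (z : int) : rat := (F z)%:~R.
Definition l (z : int) : rat := (L z)%:~R.

Lemma stepfl z : 2 * f (z + 1) = f z + l z /\ 2 * l (z + 1) = l z + 5 * f z.
Proof.
case: (stepFL z) => h1 h2; rewrite /f /l; split.
- by have := congr1 (fun x : int => x%:~R : rat) h1; rewrite /= !rmorphD !rmorphM.
- by have := congr1 (fun x : int => x%:~R : rat) h2; rewrite /= !rmorphD !rmorphM.
Qed.

Lemma f0 : f 0 = 0. Proof. by rewrite /f. Qed.
Lemma l0 : l 0 = 2. Proof. by rewrite /l. Qed.

Lemma int_ind2 (P : int -> Prop) : P 0 -> (forall z, P z -> P (z + 1)) ->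
  (forall z, P (z + 1) -> P z) -> forall z, P z.
Proof.
move=> h0 hu hd; case=> n.
- elim: n => [//|n IH]; rewrite -PS; exact: hu.
- elim: n => [|n IH]; first by apply: hd; rewrite N0.
  by apply: hd; rewrite NS.
Qed.

Lemma half (x y : rat) : 2 * x = y -> x = y / 2.
Proof. by move=> <-; field. Qed.
Arguments half {x y}.

Lemma addfl p q : 2 * f (p + q) = f p * l q + l p * f q /\
                  2 * l (p + q) = l p * l q + 5 * f p * f q.
Proof.
elim/int_ind2: q.
- by rewrite addr0 f0 l0; split; ring.
- move=> q [h1 h2]; case: (stepfl q) => e1 e2; case: (stepfl (p + q)) => e3 e4.
  rewrite addrA (half e3) (half e4) (half e1) (half e2) (half h1) (half h2).
  by split; field.
- move=> q [h1 h2]; case: (stepfl q) => e1 e2; case: (stepfl (p + q)) => e3 e4.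
  rewrite addrA in h1 h2.
  have hX0 : f (p + q) = (l (p + q + 1) - f (p + q + 1)) / 2.
    by rewrite (half e3) (half e4); field.
  have hY0 : l (p + q) = 2 * f (p + q + 1) - f (p + q) by rewrite e3; ring.
  have hF : f q = (l (q + 1) - f (q + 1)) / 2 by rewrite (half e1) (half e2); field.
  have hL : l q = 2 * f (q + 1) - f q by rewrite e1; ring.
  by rewrite hY0 hL hX0 hF (half h1) (half h2); split; field.
Qed.

Lemma sgD (a b : int) : (-1 : rat) ^ (a + b) = (-1) ^ a * (-1) ^ b.
Proof. by rewrite expfzDr // oppr_eq0 oner_eq0. Qed.
Lemma sg1 : (-1 : rat) ^ (1 : int) = -1. Proof. by []. Qed.
Lemma sgsq (a : int) : (-1 : rat) ^ a * (-1) ^ a = 1.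
Proof.
case: a => n /=; first by rewrite -exprMn mulrNN mulr1 expr1n.
by rewrite -invfM -exprMn mulrNN mulr1 expr1n invr1.
Qed.

Lemma sgN (a : int) : (-1 : rat) ^ (- a) = (-1) ^ a.
Proof.
have h : (-1 : rat) ^ a * (-1) ^ (- a) = 1 by rewrite -sgD subrr.
have h2 := sgsq a.
transitivity (((-1 : rat) ^ a * (-1) ^ a) * (-1) ^ (- a)); first by rewrite h2 mul1r.
by rewrite -mulrA h mulr1.
Qed.

Lemma sqfl z : l z ^+ 2 - 5 * f z ^+ 2 = 4 * (-1) ^ z.
Proof.
have key : forall z, l (z + 1) ^+ 2 - 5 * f (z + 1) ^+ 2 = - (l z ^+ 2 - 5 * f z ^+ 2).
  by move=> y; case: (stepfl y) => e1 e2; rewrite (half e1) (half e2); field.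
elim/int_ind2: z.
- by rewrite l0 f0 expr0z; ring.
- by move=> z h; rewrite key h sgD sg1; ring.
- move=> z h; rewrite key sgD sg1 in h.
  by rewrite -[LHS]opprK h; ring.
Qed.

Lemma sg_cases (a : int) : (-1 : rat) ^ a = 1 \/ (-1 : rat) ^ a = -1.
Proof.
have h := sgsq a.
have : ((-1 : rat) ^ a - 1) * ((-1) ^ a + 1) == 0.
  by rewrite mulrDr mulrBl h mulr1 mul1r; apply/eqP; ring.
rewrite mulf_eq0 subr_eq0 addr_eq0 => /orP [] /eqP ->; by [left | right].
Qed.

Lemma l_neq0 z : l z != 0.
Proof.
apply/eqP => hz; have h := sqfl z; rewrite hz /f in h.
have : ((- 5 * F z ^+ 2)%:~R : rat) = 4 * (-1) ^ z by rewrite -h rmorphM rmorphN rmorphXn /=; ring.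
case: (sg_cases z) => ->; rewrite ?mulr1 ?mulrN1.
- have -> : (4 : rat) = (4 : int)%:~R by [].
  by move/intr_inj; lia.
- have -> : (- 4 : rat) = (-4 : int)%:~R by [].
  by move/intr_inj; nia.
Qed.

Lemma tel (g G : int -> rat) : (forall z, G (z + 1) - G z = g (z + 1)) ->
  forall c N, \sum_(0 <= i < N) g (c + i%:Z) = G (c + N%:Z - 1) - G (c - 1).
Proof.
move=> hG c; elim=> [|N IH].
  by rewrite big_geq // addr0 subrr.
rewrite big_nat_recr //= IH.
have e : c + N%:Z - 1 + 1 = c + N%:Z by ring.
have := hG (c + N%:Z - 1); rewrite e => <-.
have -> : c + N.+1%:Z - 1 = c + N%:Z by rewrite -PS; ring.
ring.
Qed.

Lemma sumZ_G (g G : int -> rat) : G 0 = 0 -> (forall z, G (z + 1) - G z = g (z + 1)) ->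
  forall n, sumZ 1 n g = G n.
Proof.
move=> h0 hG n; rewrite /sumZ; case: ifP => hn.
  rewrite (@tel g G hG) gez0_abs; last by lia.
  have -> : 1 + (n + 1 - 1) - 1 = n by ring.
  by rewrite subrr h0 subr0.
have hn' : n + 1 < 1 by rewrite ltNge hn.
rewrite (@tel g G hG) gez0_abs; last by lia.
have -> : n + 1 + (1 - 1 - n) - 1 = 0 by ring.
have -> : n + 1 - 1 = n by ring.
rewrite h0; ring.
Qed.

Lemma key (x y a b s t u P Q P2 Q2 : rat) :
 2*P = x*b + y*a -> 2*Q = y*b + 5*x*a -> 2*P2 = P*b+Q*a -> 2*Q2 = Q*b+5*P*a ->
 b^+2 - 5*a^+2 = 4*s -> s*s = 1 -> Q^+2 - 5*P^+2 = 4*(t*s) ->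
 P*(P2*(u*b*Q*Q2 - 4*t*s*u*(b^+2-2*s)) - x*(-u*b*y*Q + 4*t*u*(b^+2-2*s)))
   = 5*b*(b^+2-2*s)*u*P^+4.
Proof.
move=> hP hQ hP2 hQ2 hs hss hT.
have hx : 2*x = s*(b*P - a*Q).
  have e : b*(2*P) - a*(2*Q) = x*(4*s) by rewrite hP hQ -hs; ring.
  apply: (@mulfI _ 2) => //.
  transitivity (x*(4*s)*s); last by rewrite -e; ring.
  have -> : x*(4*s)*s = 4*x*(s*s) by ring.
  by rewrite hss; ring.
have hy : 2*y = s*(b*Q - 5*a*P).
  have e : b*(2*Q) - 5*a*(2*P) = y*(4*s) by rewrite hP hQ -hs; ring.
  apply: (@mulfI _ 2) => //.
  transitivity (y*(4*s)*s); last by rewrite -e; ring.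
  have -> : y*(4*s)*s = 4*y*(s*s) by ring.
  by rewrite hss; ring.
have e1 : P2*Q2 + x*y = P*Q*(b^+2-2*s).
  apply: (@mulfI _ 4) => //.
  have -> : 4*(P2*Q2 + x*y) = (2*P2)*(2*Q2) + (2*x)*(2*y) by ring.
  rewrite hP2 hQ2 hx hy.
  have -> : (P*b+Q*a)*(Q*b+5*P*a) + s*(b*P - a*Q)*(s*(b*Q - 5*a*P)) =
    (P*b+Q*a)*(Q*b+5*P*a) + (s*s)*((b*P - a*Q)*(b*Q - 5*a*P)) by ring.
  rewrite hss.
  have -> : (P*b+Q*a)*(Q*b+5*P*a) + 1*((b*P - a*Q)*(b*Q - 5*a*P)) =
    2*P*Q*(2*b^+2 - (b^+2-5*a^+2)) by ring.
  rewrite hs; ring.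
have e2 : s*P2 + x = s*P*b.
  apply: (@mulfI _ 2) => //.
  have -> : 2*(s*P2 + x) = s*(2*P2) + 2*x by ring.
  rewrite hP2 hx; ring.
have -> : P*(P2*(u*b*Q*Q2 - 4*t*s*u*(b^+2-2*s)) - x*(-u*b*y*Q + 4*t*u*(b^+2-2*s)))
  = u*b*P*Q*(P2*Q2 + x*y) - 4*t*u*(b^+2-2*s)*P*(s*P2 + x) by ring.
rewrite e1 e2.
have -> : u*b*P*Q*(P*Q*(b^+2-2*s)) - 4*t*u*(b^+2-2*s)*P*(s*P*b)
  = u*b*(b^+2-2*s)*P^+2*(Q^+2 - 4*(t*s)) by ring.
have -> : Q^+2 - 4*(t*s) = 5*P^+2 by rewrite -hT; ring.
ring.
Qed.

Theorem theorem3 (m n : int) :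
  sumZ 1 n (fun k : int => (-1 : rat) ^ (k - 1) * ((F (m * k))%:~R) ^+ 4)
  = ((F (m * n))%:~R * (F (m * n + m))%:~R *
      ((-1 : rat) ^ (n - 1) * (L m)%:~R * (L (m * n))%:~R * (L (m * n + m))%:~R
       + (-1 : rat) ^ (n * (m - 1)) * 4 * (L (2 * m))%:~R))
    / (5 * (L m)%:~R * (L (2 * m))%:~R).
Proof.
pose G := fun k : int => f (m*k) * f (m*k+m) * ((-1:rat)^(k-1) * l m * l (m*k) * l (m*k+m)
   + (-1:rat)^(k*(m-1)) * 4 * l (2* m)) / (5 * l m * l (2* m)).
apply: (@sumZ_G _ G).
  by rewrite /G mulr0 f0 !mul0r.
move=> k; rewrite /G -/(f (m * (k+1))).
have e1 : m*(k+1) = m*k + m by ring.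
rewrite e1.
have -> : k + 1 - 1 = k by ring.
have s1 : (-1:rat)^(k-1) = - (-1)^k by rewrite sgD sgN sg1; ring.
have s2 : (-1:rat)^(k*(m-1)) = (-1)^(m*k) * (-1)^k.
  by rewrite (_ : k*(m-1) = m*k + -k); [rewrite sgD sgN | ring].
have s3 : (-1:rat)^((k+1)*(m-1)) = - ((-1)^(m*k) * (-1)^m * (-1)^k).
  rewrite (_ : (k+1)*(m-1) = m*k + m + -k + -1); last by ring.
  by rewrite !sgD !sgN sg1; ring.
rewrite s1 s2 s3.
have hs := sqfl m.
have hss := sgsq m.
have hL2 : l (2* m) = l m ^+ 2 - 2 * (-1)^m.
  rewrite (_ : 2* m = m+m); last by ring.
  case: (addfl m m) => _ h; apply: (@mulfI _ 2) => //; rewrite h.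
  have -> : l m * l m + 5 * f m * f m = 2 * l m ^+ 2 - (l m ^+ 2 - 5 * f m ^+ 2) by ring.
  rewrite hs; ring.
have Dnz : 5 * l m * l (2* m) != 0 by rewrite !mulf_neq0 ?l_neq0.
case: (addfl (m*k) m) => hP hQ.
case: (addfl (m*k+m) m) => hP2 hQ2.
have hT := sqfl (m*k+m); rewrite sgD in hT.
have K := @key _ _ _ _ _ _ ((-1)^k) _ _ _ _ hP hQ hP2 hQ2 hs hss hT.
rewrite -mulrBl -[RHS](mulfK Dnz); congr (_ / _).
rewrite hL2.
lra.
Qed.
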